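(* For every $\alpha>0$ there exist $c<\infty$ and $u>0$ such that for all positive integers $i,j,k$, \[\sum_{\pi\in\mathrm{seq}_k(i,j,0)}\prod_{l=1}^k e^{-\alpha K_l}\le c\,e^{-uk^2}.\]
   Context: A legal sequence of length $k$ is a sequence of triples $\pi=[(i_0,j_0,0),(i_1,j_1,R_1),\dots,(i_k,j_k,R_k)]$ with $i_l,j_l\in\{1,2,3,\dots\}$, $R_l\in\{0,1\}$, such that for $0\le l\le k-1$: if $R_{l+1}=0$ then $i_{l+1}\ge i_l+1$ and $j_l\le j_{l+1}\le j_l+1$; if $R_{l+1}=1$ then $i_l\le i_{l+1}\le i_l+1$ and $j_{l+1}\ge j_l+1$. $\mathrm{seq}_k(i,j,0)$ is the set of legal sequences of length $k$ with $(i_k,j_k,R_k)=(i,j,0)$. For $1\le l\le k$, $K_l=i_{l-1}$ if $R_l=0$ and $K_l=j_{l-1}$ if $R_l=1$. *)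

(* Defs.v *)
From Stdlib Require Import Reals List Arith.
Import ListNotations.
Open Scope R_scope.

(* A triple (i, j, R) with R : bool (false = 0, true = 1). *)
Definition triple := (nat * nat * bool)%type.

Definition legal_step (a b : triple) : Prop :=
  let '(i, j, _) := a in
  let '(i', j', r') := b in
  if r' then (i <= i' <= i + 1)%nat /\ (j + 1 <= j')%nat
  else (i + 1 <= i')%nat /\ (j <= j' <= j + 1)%nat.

Fixpoint legal_chain (p : list triple) : Prop :=
  match p with
  | a :: ((b :: _) as t) => legal_step a b /\ legal_chain t
  | _ => True
  end.

Definition legal_seq (k : nat) (p : list triple) : Prop :=
  length p = S k /\
  Forall (fun t => let '(i, j, _) := t in (1 <= i)%nat /\ (1 <= j)%nat) p /\
  (exists i0 j0 rest, p = (i0, j0, false) :: rest) /\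
  legal_chain p.

Definition in_seqk (k i j : nat) (p : list triple) : Prop :=
  legal_seq k p /\ last p (0%nat, 0%nat, true) = (i, j, false).

Definition K_step (a b : triple) : nat :=
  let '(i, j, _) := a in
  let '(_, _, r') := b in
  if r' then j else i.

Fixpoint seq_weight (alpha : R) (p : list triple) : R :=
  match p with
  | a :: ((b :: _) as t) => exp (- alpha * INR (K_step a b)) * seq_weight alpha t
  | _ => 1
  end.

Definition sumR (l : list R) : R := fold_right Rplus 0 l.

(* Main.v *)
Require Import Defs.
From Stdlib Require Import Reals List Arith Lia Lra.
Import ListNotations.
Open Scope R_scope.

Lemma exp_le_mono x y : x <= y -> exp x <= exp y.
Proof. intros H; destruct (Rle_lt_or_eq_dec _ _ H) as [H1|H1];
  [left; apply exp_increasing; auto | subst; lra]. Qed.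

Lemma sumR_app l1 l2 : sumR (l1 ++ l2) = sumR l1 + sumR l2.
Proof. induction l1; simpl; [lra| rewrite IHl1; lra]. Qed.

Lemma sumR_map_le {A} (f g : A -> R) l :
  (forall x, In x l -> f x <= g x) -> sumR (map f l) <= sumR (map g l).
Proof. induction l; simpl; intros H; [lra|].
  pose proof (H a (or_introl eq_refl)). assert (sumR (map f l) <= sumR (map g l))
  by (apply IHl; auto). lra. Qed.

Lemma sumR_map_scal {A} c (h : A -> R) l :
  sumR (map (fun x => c * h x) l) = c * sumR (map h l).
Proof. induction l; simpl; [lra| rewrite IHl; lra]. Qed.

Lemma sumR_map_plus {A} (g h : A -> R) l :
  sumR (map (fun x => g x + h x) l) = sumR (map g l) + sumR (map h l).
Proof. induction l; simpl; [lra| rewrite IHl; lra]. Qed.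

Lemma sumR_map_nonneg {A} (f : A -> R) l :
  (forall x, 0 <= f x) -> 0 <= sumR (map f l).
Proof. intros H; induction l; simpl; [lra| pose proof (H a); lra]. Qed.

Lemma sumR_flat_map {A B} (g : B -> R) (F : A -> list B) l :
  sumR (map g (flat_map F l)) = sumR (map (fun n => sumR (map g (F n))) l).
Proof. induction l; simpl; [lra|]. rewrite map_app, sumR_app, IHl; lra. Qed.

Definition d0 : triple := (0%nat, 0%nat, true).

Fixpoint sumK (p : list triple) : nat :=
  match p with
  | a :: ((b :: _) as t) => (K_step a b + sumK t)%nat
  | _ => 0%nat
  end.

Lemma weight_exp alpha p : seq_weight alpha p = exp (- alpha * INR (sumK p)).
Proof.
  induction p as [|a t IH]; simpl.
  - rewrite Rmult_0_r, exp_0; auto.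
  - destruct t as [|b t'].
    + rewrite Rmult_0_r, exp_0; auto.
    + rewrite IH, plus_INR, <- exp_plus. f_equal. ring.
Qed.

Definition coordsOK (t : triple) : Prop := let '(i, j, _) := t in (1 <= i)%nat /\ (1 <= j)%nat.

Lemma count_lemma : forall k p i0 j0 r0, legal_chain ((i0,j0,r0) :: p) -> length p = k ->
  exists a b, (a + b = k)%nat /\
   (2 * sumK ((i0,j0,r0) :: p) + a + b >= 2*(a*i0) + a*a + 2*(b*j0) + b*b)%nat.
Proof.
  induction k as [|k IH]; intros p i0 j0 r0 Hc Hl.
  - destruct p; [|discriminate]. exists 0%nat, 0%nat. simpl. lia.
  - destruct p as [|[[i1 j1] r1] p']; [discriminate|].
    simpl in Hc. destruct Hc as [Hs Hc].
    destruct (IH p' i1 j1 r1 Hc) as [a [b [Hab Hb]]]; [simpl in Hl; lia|].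
    change (sumK ((i0, j0, r0) :: (i1, j1, r1) :: p')) with
      (K_step (i0,j0,r0) (i1,j1,r1) + sumK ((i1, j1, r1) :: p'))%nat.
    destruct r1; simpl in Hs.
    + change (K_step (i0,j0,r0) (i1,j1,true)) with j0. exists a, (S b). split; [lia|].
      assert (a * i0 <= a * i1)%nat by (apply Nat.mul_le_mono_l; lia).
      assert (b * (j0+1) <= b * j1)%nat by (apply Nat.mul_le_mono_l; lia).
      replace (S b * S b)%nat with (b*b + 2*b + 1)%nat by ring.
      replace (S b * j0)%nat with (b*j0 + j0)%nat by ring.
      replace (b * (j0+1))%nat with (b*j0 + b)%nat in * by ring.
      lia.
    + change (K_step (i0,j0,r0) (i1,j1,false)) with i0. exists (S a), b. split; [lia|].
      assert (a * (i0+1) <= a * i1)%nat by (apply Nat.mul_le_mono_l; lia).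
      assert (b * j0 <= b * j1)%nat by (apply Nat.mul_le_mono_l; lia).
      replace (S a * S a)%nat with (a*a + 2*a + 1)%nat by ring.
      replace (S a * i0)%nat with (a*i0 + i0)%nat by ring.
      replace (a * (i0+1))%nat with (a*i0 + a)%nat in * by ring.
      lia.
Qed.

Lemma quad_lemma k p : legal_chain p -> Forall coordsOK p -> length p = S k ->
  (4 * sumK p >= k * k)%nat.
Proof.
  intros Hc Hf Hl. destruct p as [|[[i0 j0] r0] p]; [discriminate|].
  pose proof (Forall_inv Hf) as H1. simpl in H1. destruct H1 as [Hi0 Hj0].
  simpl in Hl. injection Hl as Hl.
  destruct (count_lemma k p i0 j0 r0 Hc Hl) as [a [b [Hab Hb]]].
  subst k.
  assert (a <= a * i0)%nat by nia. assert (b <= b * j0)%nat by nia.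
  assert ((a+b)*(a+b) <= 2*(a*a) + 2*(b*b))%nat.
  {
    destruct (Nat.le_ge_cases a b) as [Hle|Hle].
    - destruct (Nat.le_exists_sub a b Hle) as [c [Hc' _]]. subst b. nia.
    - destruct (Nat.le_exists_sub b a Hle) as [c [Hc' _]]. subst a. nia. }
  rewrite <- Hab. set (s := sumK _) in *. set (x := (a*a)%nat) in *. set (y := (b*b)%nat) in *. set (z := ((a+b)*(a+b))%nat) in *. set (u := (a*i0)%nat) in *. set (v := (b*j0)%nat) in *. lia.
Qed.

Lemma chain_app : forall p e, p <> [] -> legal_chain (p ++ [e]) ->
  legal_chain p /\ legal_step (last p d0) e.
Proof.
  induction p as [|a t IH]; intros e Hne Hc; [congruence|].
  destruct t as [|b t'].
  - simpl in Hc. simpl. tauto.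
  - change ((a :: b :: t') ++ [e]) with (a :: ((b :: t') ++ [e])) in Hc.
    simpl in Hc. destruct Hc as [H1 H2].
    destruct (IH e ltac:(discriminate) H2) as [H3 H4].
    split; [simpl; tauto|]. exact H4.
Qed.

Lemma sumK_app : forall p e, p <> [] ->
  sumK (p ++ [e]) = (sumK p + K_step (last p d0) e)%nat.
Proof.
  induction p as [|a t IH]; intros e Hne; [congruence|].
  destruct t as [|b t'].
  - simpl. lia.
  - change ((a :: b :: t') ++ [e]) with (a :: ((b :: t') ++ [e])).
    simpl ((b :: t') ++ [e]).
    change (sumK (a :: b :: (t' ++ [e]))) with (K_step a b + sumK (b :: t' ++ [e]))%nat.
    change (b :: t' ++ [e]) with ((b :: t') ++ [e]).
    rewrite IH by discriminate.
    change (sumK (a :: b :: t')) with (K_step a b + sumK (b :: t'))%nat.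
    simpl (last _ _). lia.
Qed.

Lemma last_in {A} (l : list A) d : l <> [] -> In (last l d) l.
Proof.
  induction l as [|a t IH]; intros H; [congruence|].
  destruct t as [|b t']; [simpl; auto|].
  right. apply IH. discriminate.
Qed.

Definition triple_dec : forall a b : triple, {a = b} + {a <> b}.
Proof. repeat decide equality. Defined.

Definition teq (a b : triple) : bool := if triple_dec a b then true else false.

Lemma grouping {X} (key : X -> triple) (f : X -> R) (A : list triple) (S : list X) :
  (forall p, In p S -> In (key p) A) -> (forall p, 0 <= f p) ->
  sumR (map f S) <= sumR (map (fun a => sumR (map f (filter (fun p => teq (key p) a) S))) A).
Proof.
  intros HA Hf. induction S as [|x S' IH]; simpl.
  - apply sumR_map_nonneg. intros. simpl. lra.
  - assert (E : forall a, sumR (map f (if teq (key x) a then x :: filter (fun p => teq (key p) a) S'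
       else filter (fun p => teq (key p) a) S')) =
       (if teq (key x) a then f x else 0) + sumR (map f (filter (fun p => teq (key p) a) S'))).
    { intros a. destruct (teq (key x) a); simpl; lra. }
    rewrite (map_ext _ _ E), sumR_map_plus.
    assert (Hi : f x <= sumR (map (fun a => if teq (key x) a then f x else 0) A)).
    { assert (Hin : In (key x) A) by (apply HA; left; auto).
      clear - Hin Hf. induction A as [|a A' IHA]; [destruct Hin|].
      simpl. destruct Hin as [Hin|Hin].
      - subst. assert (Ht : teq (key x) (key x) = true) by
          (unfold teq; destruct (triple_dec (key x) (key x)); congruence).
        rewrite Ht.
        pose proof (sumR_map_nonneg (fun a => if teq (key x) a then f x else 0) A').
        assert (forall a, 0 <= (if teq (key x) a then f x else 0)) by
          (intros a0; destruct (teq (key x) a0); [apply Hf | lra]). specialize (H H0). lra.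
      - specialize (IHA Hin). destruct (teq (key x) a); pose proof (Hf x); lra. }
    assert (sumR (map f S') <= sumR (map (fun a => sumR (map f (filter (fun p => teq (key p) a) S'))) A))
      by (apply IH; intros; apply HA; right; auto).
    lra.
Qed.

Definition quad (x y : nat) : list triple := [(x,y,false);(x,y,true)].

Definition preds (e : triple) : list triple :=
  let '(i', j', r') := e in
  if r' then flat_map (fun n => quad i' n ++ quad (i'-1) n) (seq 1 (j'-1))
  else flat_map (fun n => quad n j' ++ quad n (j'-1)) (seq 1 (i'-1)).

Lemma preds_in a e : legal_step a e -> coordsOK a -> In a (preds e).
Proof.
  destruct a as [[x y] r]; destruct e as [[i' j'] r']; intros Hs Hc; unfold preds; simpl in Hs, Hc.
  destruct r'; apply in_flat_map.
  - exists y. split; [apply in_seq; lia|].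
    apply in_or_app. unfold quad.
    assert (x = i' \/ x = i' - 1)%nat as [->| ->] by lia;
    [left|right]; destruct r; simpl; auto.
  - exists x. split; [apply in_seq; lia|].
    apply in_or_app. unfold quad.
    assert (y = j' \/ y = j' - 1)%nat as [->| ->] by lia;
    [left|right]; destruct r; simpl; auto.
Qed.

Lemma geom beta : 0 < beta -> forall N m,
  sumR (map (fun n => exp (- beta * INR n)) (seq m N)) <= exp (- beta * INR m) / (1 - exp (- beta)).
Proof.
  intros Hb. assert (Hq : exp (- beta) < 1).
  { rewrite <- exp_0. apply exp_increasing. lra. }
  assert (Hq0 : 0 < exp (- beta)) by apply exp_pos.
  induction N as [|N IH]; intros m; simpl.
  - apply Rlt_le. apply Rdiv_lt_0_compat; [apply exp_pos|lra].
  - specialize (IH (S m)). rewrite S_INR in IH.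
    replace (- beta * (INR m + 1)) with (- beta * INR m + - beta) in IH by ring.
    rewrite exp_plus in IH.
    set (E := exp (- beta * INR m)) in *. set (q := exp (- beta)) in *.
    assert (E + E * q / (1 - q) = E / (1 - q)) by (field; lra). lra.
Qed.

Definition Cst (beta : R) := 4 / (1 - exp (- beta)).

Lemma preds_sum beta e : 0 < beta ->
  sumR (map (fun a => exp (- beta * INR (K_step a e))) (preds e)) <= Cst beta.
Proof.
  intros Hb. assert (Hq : exp (- beta) < 1).
  { rewrite <- exp_0. apply exp_increasing. lra. }
  assert (Hq0 : 0 < exp (- beta)) by apply exp_pos.
  assert (G : sumR (map (fun n => 4 * exp (- beta * INR n)) (seq 1 (match e with (i', j', r') => if r' then j' - 1 else i' - 1 end))) <= Cst beta).
  { rewrite sumR_map_scal. pose proof (geom beta Hb (match e with (i', j', r') => if r' then j' - 1 else i' - 1 end) 1).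
    simpl INR in H. replace (- beta * 1) with (- beta) in H by ring.
    unfold Cst. assert (exp (-beta) / (1 - exp (- beta)) <= 1 / (1 - exp (-beta))).
    { unfold Rdiv. apply Rmult_le_compat_r; [apply Rlt_le, Rinv_0_lt_compat; lra| lra]. }
    unfold Rdiv in *. lra. }
  destruct e as [[i' j'] r']; unfold preds.
  destruct r'; cbv beta iota in G |- *; rewrite sumR_flat_map; (eapply Rle_trans; [|exact G]); right; f_equal; apply map_ext; intros n; simpl; ring.
Qed.

Definition W (beta : R) (p : list triple) : R := exp (- beta * INR (sumK p)).

Lemma teq_true x y : teq x y = true -> x = y.
Proof. unfold teq; destruct (triple_dec x y); congruence. Qed.

Lemma decomp p e k : length p = S (S k) -> last p d0 = e ->
  p = removelast p ++ [e] /\ removelast p <> [] /\ length (removelast p) = S k.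
Proof.
  intros Hl He. assert (Hne : p <> []) by (intro; subst; discriminate).
  pose proof (@app_removelast_last triple p d0 Hne) as Hp. rewrite He in Hp.
  assert (length (removelast p) = S k).
  { rewrite Hp in Hl. rewrite length_app in Hl. simpl in Hl. lia. }
  split; [exact Hp|]. split; [|auto]. intro Hq; rewrite Hq in H; discriminate.
Qed.

Lemma W_pos beta p : 0 <= W beta p.
Proof. unfold W. left. apply exp_pos. Qed.

Definition chainP (k : nat) (e : triple) (p : list triple) : Prop :=
  length p = S k /\ legal_chain p /\ Forall coordsOK p /\ last p d0 = e.

Lemma sum_bound beta (Hb : 0 < beta) : forall k e S, NoDup S ->
  (forall p, In p S -> chainP k e p) -> sumR (map (W beta) S) <= Cst beta ^ k.
Proof.
  induction k as [|k IH]; intros e S HN HS.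
  - assert (H1 : forall p, In p S -> p = [e]).
    { intros p Hp. destruct (HS p Hp) as [Hl [_ [_ He]]].
      destruct p as [|x [|y t]]; simpl in Hl, He; try discriminate. congruence. }
    destruct S as [|p S']; simpl; [lra|].
    destruct S' as [|p' S''].
    + rewrite (H1 p (or_introl eq_refl)). unfold W. simpl. rewrite Rmult_0_r, exp_0. lra.
    + exfalso. inversion HN; subst. apply H2.
      rewrite (H1 p (or_introl eq_refl)), (H1 p' (or_intror (or_introl eq_refl))). left; auto.
  - set (key := fun p : list triple => last (removelast p) d0).
    eapply Rle_trans.
    { apply (grouping key (W beta) (preds e) S); [|apply W_pos].
      intros p Hp. destruct (HS p Hp) as [Hl [Hc [Hf He]]].
      destruct (decomp p e k Hl He) as [Hp' [Hne Hlq]].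
      rewrite Hp' in Hc, Hf. apply chain_app in Hc; [|auto]. destruct Hc as [_ Hs].
      apply Forall_app in Hf. destruct Hf as [Hf _].
      apply preds_in; [exact Hs|].
      rewrite Forall_forall in Hf. apply Hf. apply last_in. auto. }
    eapply Rle_trans.
    { apply (sumR_map_le _ (fun a => exp (- beta * INR (K_step a e)) * Cst beta ^ k)).
      intros a Ha.
      set (F := filter (fun p => teq (key p) a) S).
      assert (EW : forall p, In p F -> W beta p = exp (- beta * INR (K_step a e)) * W beta (removelast p)).
      { intros p Hp. unfold F in Hp. apply filter_In in Hp. destruct Hp as [Hp Hk].
        apply teq_true in Hk. unfold key in Hk.
        destruct (HS p Hp) as [Hl [Hc [Hf He]]].
        destruct (decomp p e k Hl He) as [Hp' [Hne Hlq]].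
        set (q := removelast p) in *. rewrite <- Hk.
        unfold W. rewrite Hp' at 1. rewrite sumK_app by auto. rewrite plus_INR, <- exp_plus.
        f_equal. ring. }
      rewrite (map_ext_in _ _ F EW), sumR_map_scal.
      apply Rmult_le_compat_l; [left; apply exp_pos|].
      rewrite <- (map_map (@removelast triple) (W beta)).
      apply (IH a).
      + apply NoDup_map_NoDup_ForallPairs; [|apply NoDup_filter; auto].
        intros p1 p2 H1 H2 Heq. unfold F in H1, H2. apply filter_In in H1, H2.
        destruct (HS p1 (proj1 H1)) as [Hl1 [_ [_ He1]]].
        destruct (HS p2 (proj1 H2)) as [Hl2 [_ [_ He2]]].
        destruct (decomp p1 e k Hl1 He1) as [E1 _].
        destruct (decomp p2 e k Hl2 He2) as [E2 _].
        rewrite E1, E2, Heq. reflexivity.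
      + intros q Hq. apply in_map_iff in Hq. destruct Hq as [p [Hqp Hp]].
        unfold F in Hp. apply filter_In in Hp. destruct Hp as [Hp Hk].
        apply teq_true in Hk. unfold key in Hk.
        destruct (HS p Hp) as [Hl [Hc [Hf He]]].
        destruct (decomp p e k Hl He) as [Hp' [Hne Hlq]].
        rewrite Hp' in Hc, Hf. apply chain_app in Hc; [|auto]. destruct Hc as [Hc _].
        apply Forall_app in Hf. destruct Hf as [Hf _].
        subst q. split; [auto|]. split; [auto|]. split; auto. }
    rewrite (map_ext _ (fun a => Cst beta ^ k * exp (- beta * INR (K_step a e))))
      by (intros; ring).
    rewrite sumR_map_scal. simpl.
    pose proof (preds_sum beta e Hb).
    assert (0 <= Cst beta ^ k).
    { apply pow_le. unfold Cst. assert (exp (-beta) < 1) by (rewrite <- exp_0; apply exp_increasing; lra).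
      apply Rlt_le, Rdiv_lt_0_compat; lra. }
    rewrite (Rmult_comm (Cst beta)). apply Rmult_le_compat_l; auto.
Qed.

Theorem lemma4p17 :
  forall alpha : R, 0 < alpha ->
  exists c u : R, 0 < u /\
    forall (i j k : nat), (1 <= i)%nat -> (1 <= j)%nat -> (1 <= k)%nat ->
    forall S : list (list triple),
      NoDup S -> Forall (in_seqk k i j) S ->
      sumR (map (seq_weight alpha) S) <= c * exp (- u * INR k ^ 2).
Proof.
  intros alpha Ha.
  set (beta := alpha / 2).
  assert (Hb : 0 < beta) by (unfold beta; lra).
  set (C := Cst beta).
  assert (HC : 0 < C).
  { unfold C, Cst. assert (exp (-beta) < 1) by (rewrite <- exp_0; apply exp_increasing; lra).
    apply Rdiv_lt_0_compat; lra. }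
  set (L := ln C).
  exists (exp (4 * L ^ 2 / alpha)), (alpha / 16). split; [lra|].
  intros i j k Hi Hj Hk S HN HF.
  rewrite Forall_forall in HF.
  set (E := exp (- alpha * INR k ^ 2 / 8)).
  eapply Rle_trans.
  { apply (sumR_map_le _ (fun p => E * W beta p)).
    intros p Hp. destruct (HF p Hp) as [[Hl [Hf [_ Hc]]] _].
    pose proof (quad_lemma k p Hc Hf Hl) as Hq.
    apply le_INR in Hq. rewrite !mult_INR in Hq. simpl (INR 4) in Hq.
    rewrite weight_exp. unfold E, W. rewrite <- exp_plus. apply exp_le_mono.
    unfold beta. simpl. nra. }
  rewrite sumR_map_scal.
  eapply Rle_trans.
  { apply Rmult_le_compat_l; [left; apply exp_pos|].
    apply (sum_bound beta Hb k (i, j, false) S HN).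
    intros p Hp. destruct (HF p Hp) as [[Hl [Hf [_ Hc]]] He].
    split; [auto|]. split; [auto|]. split; [exact Hf| exact He]. }
  fold C.
  rewrite <- (Rpower_pow k C HC). unfold Rpower. fold L.
  unfold E. rewrite <- !exp_plus. apply exp_le_mono.
  assert (4 * L ^ 2 / alpha - (INR k * L - alpha * INR k ^ 2 / 16) = (2 * L - alpha * INR k / 4) ^ 2 / alpha)
    by (field; lra).
  assert (0 <= (2 * L - alpha * INR k / 4) ^ 2 / alpha).
  { apply Rle_mult_inv_pos; [apply pow2_ge_0| lra]. }
  lra.
Qed.
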